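(* Let $\mathcal{D}$ be a domain with area $|\mathcal{D}|>0$, and suppose we have $n_1$ presence observations with feature vectors $x_i\in\mathbb{R}^p$ (indexed by $y_i=1$) and $n_0\ge1$ background observations with feature vectors $x_i\in\mathbb{R}^p$ (indexed by $y_i=0$). Define the numerical IPP log-likelihood $$\ell_{\mathrm{IPP}}(\alpha,\beta)=\sum_{i:y_i=1}\big(\alpha+\beta'x_i\big)-\frac{|\mathcal{D}|}{n_0}\sum_{i:y_i=0}e^{\alpha+\beta'x_i}-\log n_1!,$$ and, for a weight $W>0$, the weighted logistic regression log-likelihood $$\ell_{\mathrm{WLR}}(\eta,\beta)=\sum_{i:y_i=1}\big(\eta+\beta'x_i\big)-\sum_{i}W^{1-y_i}\log\big(1+e^{\eta+\beta'x_i}\big),$$ where the last sum runs over all $n_1+n_0$ observations. Let $J(\beta)$ be any convex penalty, and suppose $\ell_{\mathrm{IPP}}(\alpha,\beta)-J(\beta)$ has a unique maximizer $(\hat\alpha_{\mathrm{IPP}},\hat\beta_{\mathrm{IPP}})$. If, for each $W$, $(\hat\eta_W,\hat\beta_W)$ maximizes $\ell_{\mathrm{WLR}}(\eta,\beta)-J(\beta)$, then $\lim_{W\to\infty}\hat\beta_W=\hat\beta_{\mathrm{IPP}}$.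
   Context: $\ell_{\mathrm{WLR}}$ is the log-likelihood of logistic regression of $y_i$ on $x_i$ in which every background observation ($y_i=0$) receives case weight $W$ and every presence observation receives weight $1$. *)

(* Defs.v *)
From HB Require Import structures.
From mathcomp Require Import all_boot all_order all_algebra.
From mathcomp Require Import all_classical all_reals all_analysis.
Set Implicit Arguments. Unset Strict Implicit. Unset Printing Implicit Defensive.
Import Order.TTheory GRing.Theory Num.Theory.
Import numFieldNormedType.Exports.
Local Open Scope ring_scope.

Definition dotp (R : realType) (p : nat) (b x : 'rV[R]_p) : R :=
  \sum_(j < p) b 0 j * x 0 j.

Definition convex_fun (R : realType) (p : nat) (J : 'rV[R]_p -> R) : Prop :=
  forall (u v : 'rV[R]_p) (t : R), 0 <= t -> t <= 1 ->
    J (t *: u + (1 - t) *: v) <= t * J u + (1 - t) * J v.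

Definition ell_IPP (R : realType) (p n1 n0 : nat) (A : R)
  (x1 : 'I_n1 -> 'rV[R]_p) (x0 : 'I_n0 -> 'rV[R]_p) (alpha : R) (beta : 'rV[R]_p) : R :=
  \sum_(i < n1) (alpha + dotp beta (x1 i))
  - A / n0%:R * \sum_(i < n0) expR (alpha + dotp beta (x0 i))
  - ln (n1`!)%:R.

(* weighted logistic regression log-likelihood: weight W^(1-y_i), i.e. 1 for
   presences and W for background points *)
Definition ell_WLR (R : realType) (p n1 n0 : nat) (W : R)
  (x1 : 'I_n1 -> 'rV[R]_p) (x0 : 'I_n0 -> 'rV[R]_p) (eta : R) (beta : 'rV[R]_p) : R :=
  \sum_(i < n1) (eta + dotp beta (x1 i))
  - (\sum_(i < n1) ln (1 + expR (eta + dotp beta (x1 i)))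
     + \sum_(i < n0) W * ln (1 + expR (eta + dotp beta (x0 i)))).

(* Main.v *)
Require Import Defs.
From HB Require Import structures.
From mathcomp Require Import all_boot all_order all_algebra.
From mathcomp Require Import all_classical all_reals all_analysis.
From mathcomp Require Import ring lra.
Import Order.TTheory GRing.Theory Num.Theory.
Import numFieldNormedType.Exports.
Local Open Scope classical_set_scope.
Local Open Scope ring_scope.

Section S.
Variable R : realType.

Lemma expR_cvx (t a b : R) : 0 <= t -> t <= 1 ->
  expR (t * a + (1 - t) * b) <= t * expR a + (1 - t) * expR b.
Proof.
move=> t0 t1; have := @convex_expR R (Itv01 t0 t1) a b.
by rewrite !convRE /=.
Qed.

Definition sp (s : R) := ln (1 + expR s).

Lemma sp_cvx (t a b : R) : 0 <= t -> t <= 1 ->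
  sp (t * a + (1 - t) * b) <= t * sp a + (1 - t) * sp b.
Proof.
move=> t0 t1; rewrite /sp.
have pa : 0 < 1 + expR a by rewrite ltr_wpDr // expR_ge0.
have pb : 0 < 1 + expR b by rewrite ltr_wpDr // expR_ge0.
rewrite -ler_expR lnK; last by rewrite posrE ltr_wpDr // expR_ge0.
set la := ln (1 + expR a); set lb := ln (1 + expR b).
have ea : expR la = 1 + expR a by rewrite lnK // posrE.
have eb : expR lb = 1 + expR b by rewrite lnK // posrE.
have h1 := expR_cvx t (a - la) (b - lb) t0 t1.
have h2 := expR_cvx t (- la) (- lb) t0 t1.
have E1 : expR (a - la) = expR a / (1 + expR a) by rewrite expRD expRN ea.
have E2 : expR (- la) = 1 / (1 + expR a) by rewrite expRN ea div1r.
have E3 : expR (b - lb) = expR b / (1 + expR b) by rewrite expRD expRN eb.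
have E4 : expR (- lb) = 1 / (1 + expR b) by rewrite expRN eb div1r.
rewrite E1 E3 in h1; rewrite E2 E4 in h2.
have S : t * (expR a / (1 + expR a)) + (1 - t) * (expR b / (1 + expR b))
   + (t * (1 / (1 + expR a)) + (1 - t) * (1 / (1 + expR b))) = 1.
  by field; rewrite ?gt_eqF.
set T := t * la + (1 - t) * lb.
have F1 : expR (t * (a - la) + (1 - t) * (b - lb)) = expR (t * a + (1 - t) * b) / expR T.
  by rewrite -expRN -expRD /T; congr expR; ring.
have F2 : expR (t * - la + (1 - t) * - lb) = 1 / expR T.
  by rewrite div1r -expRN; congr expR; rewrite /T; ring.
rewrite F1 in h1; rewrite F2 in h2.
have := lerD h1 h2; rewrite S -mulrDl ler_pdivrMr ?expR_gt0 // mul1r.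
by rewrite addrC.
Qed.

Lemma cont_sum (T : topologicalType) (I : Type) (r : seq I) (F : I -> T -> R) x :
  (forall i, F i @ x --> F i x) ->
  (fun z => \sum_(i <- r) F i z) @ x --> \sum_(i <- r) F i x.
Proof.
move=> cF; elim: r => [|i r IH].
  have -> : (fun z => \sum_(i <- [::]) F i z) = fun=> 0 by apply/funext=> z; rewrite big_nil.
  rewrite big_nil; exact: cvg_cst.
have -> : (fun z => \sum_(j <- i :: r) F j z) = F i + (fun z => \sum_(j <- r) F j z).
  by apply/funext=> z; rewrite big_cons.
rewrite big_cons; exact: cvgD.
Qed.

Lemma jensen_avg (p : nat) (J : 'rV[R]_p -> R) : convex_fun J -> forall n (v : 'I_n.+1 -> 'rV[R]_p),
  J ((n.+1%:R)^-1 *: \sum_(i < n.+1) v i) <= (n.+1%:R)^-1 * \sum_(i < n.+1) J (v i).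
Proof.
move=> cJ; elim=> [|n IH] v.
  by rewrite !big_ord1 invr1 scale1r mul1r.
rewrite big_ord_recr [X in _ <= _ * X]big_ord_recr /=.
set S := \sum_(i < n.+1) v (widen_ord (leqnSn n.+1) i).
set SJ := \sum_(i < n.+1) J (v (widen_ord (leqnSn n.+1) i)).
set t := (n.+2%:R)^-1 : R.
have tge0 : 0 <= t by rewrite invr_ge0.
have tle1 : t <= 1 by rewrite invf_le1 // ?ler1n // ltr0n.
have n1 : (n.+1%:R : R) != 0 by rewrite pnatr_eq0.
have n2 : (n.+2%:R : R) != 0 by rewrite pnatr_eq0.
have E : t *: (S + v ord_max) = t *: v ord_max + (1 - t) *: ((n.+1%:R)^-1 *: S).
  rewrite scalerDr addrC scalerA; congr (_ + _ *: _).
  rewrite /t; field => //.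
  have pn : 0 <= n%:R :> R by [].
  by apply/andP; split; apply/negP => /eqP hh; lra.
rewrite E; apply: le_trans (cJ _ _ _ tge0 tle1) _.
have := IH (fun i => v (widen_ord (leqnSn n.+1) i)); rewrite -/S -/SJ => h.
have t1 : 0 <= 1 - t by rewrite subr_ge0.
apply: le_trans (lerD (lexx _) (ler_wpM2l t1 h)) _.
have -> : t * (SJ + J (v ord_max)) = t * J (v ord_max) + (1 - t) * (n.+1%:R^-1 * SJ).
  rewrite /t; field.
  have pn : 0 <= n%:R :> R by [].
  by apply/andP; split; apply/negP => /eqP hh; lra.
by [].
Qed.

Lemma entry_le q (h : 'rV[R]_q) j : `|h 0 j| <= `|h|.
Proof.
rewrite [leRHS]/Num.norm /= mx_normrE.
by apply/bigmax_geP; right => /=; exists (0, j).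
Qed.

Lemma cvx1 q (J : 'rV[R]_q -> R) : convex_fun J -> forall u w s, `|s| <= 1 ->
  J (u + s *: w) <= J u + `|s| * (`|J (u + w) - J u| + `|J (u - w) - J u|).
Proof.
move=> cJ u w s s1.
have n1 := ler_norm (J (u + w) - J u).
have n2 := ler_norm (J (u - w) - J u).
have n1' := normr_ge0 (J (u + w) - J u).
have n2' := normr_ge0 (J (u - w) - J u).
case: (leP 0 s) => hs.
  have E : u + s *: w = s *: (u + w) + (1 - s) *: u.
    by apply/rowP => i; rewrite !mxE; ring.
  rewrite ger0_norm // in s1 *.
  rewrite E; apply: le_trans (cJ _ _ _ hs s1) _.
  nra.
have E : u + s *: w = (- s) *: (u - w) + (1 - - s) *: u.
  by apply/rowP => i; rewrite !mxE; ring.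
rewrite ltr0_norm // in s1 *.
have hs' : 0 <= - s by lra.
rewrite E; apply: le_trans (cJ _ _ _ hs' s1) _.
nra.
Qed.

Lemma cvx_bound q (J : 'rV[R]_q.+1 -> R) : convex_fun J -> forall u, exists M, 0 <= M /\
  forall h, `|h| <= 1 -> J (u + h) <= J u + `|h| * M.
Proof.
move=> cJ u.
set k : R := q.+1%:R.
have k0 : k != 0 by rewrite pnatr_eq0.
pose e (j : 'I_q.+1) : 'rV[R]_q.+1 := k *: delta_mx 0 j.
pose Mj j := `|J (u + e j) - J u| + `|J (u - e j) - J u|.
exists (\sum_j Mj j); split; first by apply: sumr_ge0 => j _; rewrite /Mj addr_ge0.
move=> h h1.
have E : u + h = k^-1 *: \sum_(j < q.+1) (u + h 0 j *: e j).
  rewrite big_split /= sumr_const card_ord -scaler_nat.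
  have -> : \sum_(j < q.+1) h 0 j *: e j = k *: h.
    rewrite [in RHS](row_sum_delta h) scaler_sumr; apply: eq_bigr => j _.
    by rewrite /e !scalerA mulrC.
  by rewrite scalerDr !scalerA mulVf // !scale1r.
rewrite E; apply: le_trans (@jensen_avg _ _ cJ _ _) _.
have B : forall j, J (u + h 0 j *: e j) <= J u + `|h| * \sum_j Mj j.
  move=> j; have HH := (@cvx1 _ _ cJ u (e j) (h 0 j) (le_trans (entry_le _ h j) h1)).
  apply: le_trans HH _.
  rewrite lerD2l; apply: ler_pM => //.
  - exact: entry_le.
  - rewrite (bigD1 j) //= lerDl; apply: sumr_ge0 => i _; rewrite /Mj addr_ge0 //.
apply: le_trans (ler_wpM2l _ (ler_sum _ (fun j _ => B j))) _.
  by rewrite invr_ge0.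
rewrite sumr_const card_ord -mulr_natr le_eqVlt; apply/orP; left; apply/eqP.
field; have pn : 0 <= q%:R :> R by []; by apply/negP => /eqP hh; lra.
Qed.

Lemma cvx_cont q (J : 'rV[R]_q -> R) : convex_fun J -> continuous J.
Proof.
case: q J => [|q] J cJ u.
  have E v : J v = J u by rewrite (thinmx0 v) (thinmx0 u).
  have -> : J = cst (J u) by apply/funext => v; rewrite /cst E.
  exact: cst_continuous.
have [M [M0 HM]] := @cvx_bound _ _ cJ u.
apply/(@cvgrPdist_lt _ _ _ (nbhs u) _ J (J u)) => eps eps0.
set d := Num.min 1 (eps / (M + 1)).
have d0 : 0 < d by rewrite lt_min ltr01 divr_gt0 // ltr_wpDl.
apply: filterS (@nbhs_ball_norm _ _ u (PosNum d0)) => v /= uv.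
set h := v - u.
have hn : `|h| = `|u - v| by rewrite /h distrC.
have hd : `|h| <= 1 by rewrite hn; apply: le_trans (ltW uv) _; rewrite ge_min lexx.
have hd' : `|h| * M < eps.
  have : `|h| < eps / (M + 1) by rewrite hn; apply: lt_le_trans uv _; rewrite ge_min lexx orbT.
  rewrite ltr_pdivlMr ?ltr_wpDl // => H.
  have := normr_ge0 h; nra.
have up := HM h hd.
have up2 := HM (- h); rewrite normrN in up2; have {up2} up2 := up2 hd.
have hv : u + h = v by rewrite /h addrC subrK.
rewrite hv in up.
have half : J u <= 2^-1 * J v + (1 - 2^-1) * J (u + - h).
  have E : u = 2^-1 *: v + (1 - 2^-1) *: (u + - h).
    by apply/rowP => i; rewrite /h !mxE; field.
  by rewrite {1}E; apply: cJ; [rewrite invr_ge0 | rewrite invf_le1 // ler1n].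
rewrite ltr_norml; apply/andP; split; lra.
Qed.

Lemma sum_lin n (F G H : 'I_n -> R) a c : (forall i, F i = a * G i + c * H i) ->
  \sum_i F i = a * \sum_i G i + c * \sum_i H i.
Proof. by move=> h; rewrite !mulr_sumr -big_split; apply: eq_bigr => i _; rewrite h. Qed.

Lemma sum_le n (F G H : 'I_n -> R) a c : (forall i, F i <= a * G i + c * H i) ->
  \sum_i F i <= a * \sum_i G i + c * \sum_i H i.
Proof. by move=> h; rewrite !mulr_sumr -big_split; apply: ler_sum => i _; exact: h. Qed.

Lemma dotp_lin p (t s : R) (b b' x : 'rV[R]_p) :
  dotp (t *: b + s *: b') x = t * dotp b x + s * dotp b' x.
Proof. by apply: sum_lin => j; rewrite !mxE; ring. Qed.

Lemma WLR_concave p n1 n0 (x1 : 'I_n1 -> 'rV[R]_p) (x0 : 'I_n0 -> 'rV[R]_p)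
  W (W0 : 0 <= W) t (t0 : 0 <= t) (t1 : t <= 1) e e' b b' :
  t * ell_WLR W x1 x0 e b + (1 - t) * ell_WLR W x1 x0 e' b'
  <= ell_WLR W x1 x0 (t * e + (1 - t) * e') (t *: b + (1 - t) *: b').
Proof.
rewrite /ell_WLR.
have L1 : \sum_(i < n1) (t * e + (1 - t) * e' + dotp (t *: b + (1 - t) *: b') (x1 i))
   = t * \sum_(i < n1) (e + dotp b (x1 i)) + (1 - t) * \sum_(i < n1) (e' + dotp b' (x1 i)).
  by apply: sum_lin => i; rewrite dotp_lin; ring.
have L2 : \sum_(i < n1) ln (1 + expR (t * e + (1 - t) * e' + dotp (t *: b + (1 - t) *: b') (x1 i)))
   <= t * \sum_(i < n1) ln (1 + expR (e + dotp b (x1 i)))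
      + (1 - t) * \sum_(i < n1) ln (1 + expR (e' + dotp b' (x1 i))).
  apply: sum_le => i; rewrite dotp_lin.
  have := sp_cvx t (e + dotp b (x1 i)) (e' + dotp b' (x1 i)) t0 t1; rewrite /sp.
  by rewrite (_ : t * e + (1 - t) * e' + (t * dotp b (x1 i) + (1 - t) * dotp b' (x1 i))
     = t * (e + dotp b (x1 i)) + (1 - t) * (e' + dotp b' (x1 i))) //; ring.
have L3 : \sum_(i < n0) W * ln (1 + expR (t * e + (1 - t) * e' + dotp (t *: b + (1 - t) *: b') (x0 i)))
   <= t * \sum_(i < n0) W * ln (1 + expR (e + dotp b (x0 i)))
      + (1 - t) * \sum_(i < n0) W * ln (1 + expR (e' + dotp b' (x0 i))).
  apply: sum_le => i; rewrite dotp_lin.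
  have := sp_cvx t (e + dotp b (x0 i)) (e' + dotp b' (x0 i)) t0 t1; rewrite /sp.
  rewrite (_ : t * e + (1 - t) * e' + (t * dotp b (x0 i) + (1 - t) * dotp b' (x0 i))
     = t * (e + dotp b (x0 i)) + (1 - t) * (e' + dotp b' (x0 i))); last by ring.
  move=> /(ler_wpM2l W0) H; apply: le_trans H _; rewrite le_eqVlt; apply/orP; left; apply/eqP; ring.
rewrite L1; lra.
Qed.

Variables (p n1 n0 : nat) (A : R) (x1 : 'I_n1 -> 'rV[R]_p) (x0 : 'I_n0 -> 'rV[R]_p)
  (J : 'rV[R]_p -> R).
Hypothesis A0 : 0 < A.
Hypothesis n00 : (0 < n0)%N.

Definition K W := W * n0%:R / A.
Definition L W := ln (K W).
Definition g W a b := ell_WLR W x1 x0 (a - L W) b - J b + n1%:R * L W - ln (n1`!)%:R.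
Definition D1 W a b := \sum_(i < n1) ln (1 + expR (a + dotp b (x1 i)) / K W).
Definition D0 W a b := \sum_(i < n0) W * (expR (a + dotp b (x0 i)) / K W
    - ln (1 + expR (a + dotp b (x0 i)) / K W)).
Definition fI a b := ell_IPP A x1 x0 a b - J b.

Lemma K_gt0 W : 0 < W -> 0 < K W.
Proof. by move=> W0; rewrite /K divr_gt0 // mulr_gt0 // ltr0n. Qed.

Lemma expL W a d : 0 < W -> expR (a - L W + d) = expR (a + d) / K W.
Proof.
move=> W0; rewrite (_ : a - L W + d = (a + d) - L W); last by ring.
by rewrite expRD expRN /L lnK // posrE K_gt0.
Qed.

Lemma gE W a b : 0 < W -> g W a b = fI a b - D1 W a b + D0 W a b.
Proof.
move=> W0.
rewrite /g /fI /ell_WLR /ell_IPP /D1 /D0.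
have S1 : \sum_(i < n1) (a - L W + dotp b (x1 i)) = \sum_(i < n1) (a + dotp b (x1 i)) - n1%:R * L W.
  rewrite (eq_bigr (fun i => (a + dotp b (x1 i)) - L W)); last by move=> i _; ring.
  by rewrite sumrB sumr_const card_ord mulr_natl.
have S2 : \sum_(i < n1) ln (1 + expR (a - L W + dotp b (x1 i))) = \sum_(i < n1) ln (1 + expR (a + dotp b (x1 i)) / K W).
  by apply: eq_bigr => i _; rewrite expL.
have S3 : \sum_(i < n0) W * ln (1 + expR (a - L W + dotp b (x0 i))) = \sum_(i < n0) W * ln (1 + expR (a + dotp b (x0 i)) / K W).
  by apply: eq_bigr => i _; rewrite expL.
have S4 : \sum_(i < n0) W * (expR (a + dotp b (x0 i)) / K W - ln (1 + expR (a + dotp b (x0 i)) / K W))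
   = A / n0%:R * \sum_(i < n0) expR (a + dotp b (x0 i)) - \sum_(i < n0) W * ln (1 + expR (a + dotp b (x0 i)) / K W).
  rewrite (eq_bigr (fun i => W * (expR (a + dotp b (x0 i)) / K W) - W * ln (1 + expR (a + dotp b (x0 i)) / K W))); last by move=> i _; ring.
  rewrite sumrB; congr (_ - _).
  rewrite mulr_sumr; apply: eq_bigr => i _; rewrite /K.
  have n0' : (n0%:R : R) != 0 by rewrite pnatr_eq0 -lt0n.
  field; rewrite n0' gt_eqF //= gt_eqF //.
rewrite S1 S2 S3 S4; ring.
Qed.

Lemma ln1_lower (u : R) : 0 <= u -> u - u ^+ 2 <= ln (1 + u).
Proof.
move=> u0.
have pu : 0 < 1 + u by lra.
have h : ln ((1 + u)^-1) <= (1 + u)^-1 - 1.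
  have := @le_ln1Dx R ((1 + u)^-1 - 1); rewrite (_ : 1 + ((1 + u)^-1 - 1) = (1 + u)^-1); last by ring.
  apply.
  have : 0 < (1 + u)^-1 by rewrite invr_gt0.
  lra.
rewrite lnV ?posrE // in h.
suff : u - u ^+ 2 <= 1 - (1 + u)^-1 by lra.
have E : 1 - (1 + u)^-1 = u / (1 + u) by field; rewrite gt_eqF.
rewrite E ler_pdivlMr //.
have : 0 <= u ^+ 3 by rewrite exprn_ge0.
rewrite !exprS expr0; nra.
Qed.

Lemma D1_bnd W a b : 0 < W -> D1 W a b <= (\sum_(i < n1) expR (a + dotp b (x1 i))) / K W.
Proof.
move=> W0; rewrite /D1 mulr_suml; apply: ler_sum => i _.
apply: le_ln1Dx; have : 0 <= expR (a + dotp b (x1 i)) / K W.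
  by rewrite divr_ge0 ?expR_ge0 // ltW // K_gt0.
lra.
Qed.

Lemma D0_bnd W a b : 0 < W ->
  D0 W a b <= (A / n0%:R) / K W * \sum_(i < n0) expR (a + dotp b (x0 i)) ^+ 2.
Proof.
move=> W0; rewrite /D0 mulr_sumr; apply: ler_sum => i _.
set e := expR _.
have K0 := K_gt0 W W0.
have u0 : 0 <= e / K W by rewrite divr_ge0 ?expR_ge0 // ltW.
have h := ln1_lower (e / K W) u0.
have -> : A / n0%:R / K W * e ^+ 2 = W * (e / K W) ^+ 2.
  have n0' : (n0%:R : R) != 0 by rewrite pnatr_eq0 -lt0n.
  rewrite /K; field; rewrite n0' !gt_eqF //.
apply: ler_wpM2l; [exact: ltW | lra].
Qed.

Hypothesis cJ : convex_fun J.

Local Notation Z := (R * 'rV[R]_p)%type.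

Definition fZ (z : Z) := fI z.1 z.2.

Lemma cont_aff x : continuous (fun z : Z => z.1 + dotp z.2 x).
Proof.
move=> z; apply: cvgD; first exact: cvg_fst.
rewrite /dotp; apply: cont_sum => j.
apply: cvgMr_tmp.
apply: (@continuous_comp _ _ _ (fun z : Z => z.2) (fun b : 'rV[R]_p => b 0 j)).
  exact: cvg_snd.
exact: coord_continuous.
Qed.

Lemma cont_exp_aff x : continuous (fun z : Z => expR (z.1 + dotp z.2 x)).
Proof.
move=> z; apply: (@continuous_comp _ _ _ (fun z : Z => z.1 + dotp z.2 x) expR).
  exact: cont_aff.
exact: continuous_expR.
Qed.

Lemma cont_fZ : continuous fZ.
Proof.
move=> z; rewrite /fZ /fI /ell_IPP.
apply: cvgB; last first.
  apply: (@continuous_comp _ _ _ (fun z : Z => z.2) J); first exact: cvg_snd.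
  exact: cvx_cont.
apply: cvgB; last exact: cvg_cst.
apply: cvgB.
  by apply: cont_sum => i; exact: cont_aff.
apply: cvgMl_tmp.
by apply: cont_sum => i; exact: cont_exp_aff.
Qed.

Lemma cont_B0 : continuous (fun z : Z => \sum_(i < n0) expR (z.1 + dotp z.2 (x0 i)) ^+ 2).
Proof.
move=> z; apply: cont_sum => i.
have -> : (fun z : Z => expR (z.1 + dotp z.2 (x0 i)) ^+ 2) =
  (fun z : Z => expR (z.1 + dotp z.2 (x0 i))) \* (fun z : Z => expR (z.1 + dotp z.2 (x0 i))).
  by apply/funext => y; rewrite /= expr2.
rewrite expr2; apply: cvgM; exact: cont_exp_aff.
Qed.

Definition Sph (zs : Z) (eps : R) := [set z : Z | `|zs - z| = eps].

Lemma Sph_compact zs eps : 0 < eps -> compact (Sph zs eps).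
Proof.
move=> e0.
have cP : compact `[zs.1 - eps, zs.1 + eps] by exact: segment_compact.
have cQ : compact (closed_ball_ Num.norm zs.2 eps).
  apply: bounded_closed_compact; last exact: closed_closed_ball_.
  exists (`|zs.2| + eps); split; first by rewrite realE addr_ge0 // ltW.
  move=> M hM y hy; rewrite /closed_ball_ /= in hy.
  apply: le_trans (ltW hM).
  have := ler_normB zs.2 (zs.2 - y); rewrite opprB addrC subrK => h.
  have := ler_normD zs.2 (y - zs.2).
  rewrite addrC subrK distrC => h2; lra.
apply: (subclosed_compact _ (compact_setX cP cQ)).
  rewrite /Sph -/((Num.norm \o (fun y => zs - y)) @^-1` [set x | x = eps]).
  apply: (preimage_closed _ (@closed_eq _ _)) => y _.
  apply: (continuous_comp _ (@norm_continuous _ _ _)).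
  exact: (continuousB (@cst_continuous _ _ _ _)).
move=> z; rewrite /Sph /= prod_normE /= => hz; split.
  have : `|zs.1 - z.1| <= eps by rewrite -hz le_max lexx.
  rewrite /= in_itv /= ler_norml; move=> /andP[h1 h2]; apply/andP; split; lra.
by rewrite /closed_ball_ /= -hz le_max lexx orbT.
Qed.

Lemma D1_ge0 W a b : 0 < W -> 0 <= D1 W a b.
Proof.
move=> W0; rewrite /D1; apply: sumr_ge0 => i _; apply: ln_ge0.
have : 0 <= expR (a + dotp b (x1 i)) / K W.
  by rewrite divr_ge0 ?expR_ge0 // ltW // K_gt0.
lra.
Qed.

Lemma D0_ge0 W a b : 0 < W -> 0 <= D0 W a b.
Proof.
move=> W0; rewrite /D0; apply: sumr_ge0 => i _; apply: mulr_ge0; first exact: ltW.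
have u0 : 0 <= expR (a + dotp b (x0 i)) / K W.
  by rewrite divr_ge0 ?expR_ge0 // ltW // K_gt0.
rewrite subr_ge0; apply: le_ln1Dx; lra.
Qed.

Lemma main alphaI betaI (etaW : R -> R) (betaW : R -> 'rV[R]_p) :
  (forall alpha beta,
     ell_IPP A x1 x0 alpha beta - J beta <= ell_IPP A x1 x0 alphaI betaI - J betaI) ->
  (forall alpha beta,
     (forall alpha' beta',
        ell_IPP A x1 x0 alpha' beta' - J beta' <= ell_IPP A x1 x0 alpha beta - J beta) ->
     alpha = alphaI /\ beta = betaI) ->
  (forall W, 0 < W -> forall eta beta,
     ell_WLR W x1 x0 eta beta - J beta <= ell_WLR W x1 x0 (etaW W) (betaW W) - J (betaW W)) ->
  betaW W @[W --> +oo] --> betaI.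
Proof.
move=> Hmax Huniq HW.
pose zs : Z := (alphaI, betaI).
apply/cvgrPdist_lt => eps e0.
have S0 : Sph zs eps !=set0.
  exists (alphaI + eps, betaI); rewrite /Sph /= prod_normE /= subrr normr0.
  rewrite (_ : alphaI - (alphaI + eps) = - eps); last by ring.
  by rewrite normrN gtr0_norm // max_l // ltW.
have cS := Sph_compact zs eps e0.
have [c cS' cmax] := compact_EVT_max S0 cS (continuous_subspaceT cont_fZ).
have [m mS Bmax] := compact_EVT_max S0 cS (continuous_subspaceT cont_B0).
move: cS' mS; rewrite !inE => cS' mS.
set B0m := \sum_(i < n0) expR (m.1 + dotp m.2 (x0 i)) ^+ 2 in Bmax.
set B1 := \sum_(i < n1) expR (alphaI + dotp betaI (x1 i)).
have fcz : fZ c < fZ zs.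
  rewrite lt_neqAle Hmax andbT; apply/negP => /eqP E.
  have [E1 E2] : c.1 = alphaI /\ c.2 = betaI.
    by apply: Huniq => a' b'; have := Hmax a' b'; rewrite /fZ /fI /= in E; rewrite E.
  move: cS'; rewrite /Sph (_ : c = zs); last by case: c E1 E2 {E cmax} => ? ? /= -> ->.
  rewrite /= prod_normE /= !subrr !normr0 maxxx => /esym/eqP; by rewrite gt_eqF.
set del := fZ zs - fZ c.
have del0 : 0 < del by rewrite subr_gt0.
have B0m0 : 0 <= B0m by apply: sumr_ge0 => i _; rewrite exprn_ge0 // expR_ge0.
have B10 : 0 <= B1 by apply: sumr_ge0 => i _; rewrite expR_ge0.
have n0p : (0 : R) < n0%:R by rewrite ltr0n.
set Cst := B1 + A / n0%:R * B0m.
have Cst0 : 0 <= Cst by rewrite addr_ge0 // mulr_ge0 // divr_ge0 // ltW.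
have Cnn : 0 <= (1 + Cst) * A / (n0%:R * del).
  apply: divr_ge0; first by apply: mulr_ge0; [lra | exact: ltW].
  by apply: mulr_ge0; exact: ltW.
have Creal : (1 + Cst) * A / (n0%:R * del) \is Num.real by exact: ger0_real.
apply: filterS (nbhs_pinfty_gt Creal) => W hW.
have W0 : 0 < W.
  exact: le_lt_trans Cnn hW.
have K0 := K_gt0 W W0.
have CK : Cst / K W < del.
  rewrite ltr_pdivrMr // /K.
  move: hW; rewrite ltr_pdivrMr ?mulr_gt0 // => hW.
  rewrite (_ : del * (W * n0%:R / A) = (W * (n0%:R * del)) / A); last by field; rewrite gt_eqF.
  rewrite ltr_pdivlMr //.
  have : 0 < A by [].
  nra.
rewrite ltNge; apply/negP => hge.
pose zW : Z := (etaW W + L W, betaW W).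
set N := `|zs - zW|.
have NE : N = Num.max `|alphaI - zW.1| `|betaI - betaW W| by rewrite /N prod_normE.
have NW : eps <= N by rewrite NE le_max hge orbT.
have N0 : 0 < N by exact: lt_le_trans e0 NW.
pose lam := eps / N.
have lam0 : 0 < lam by rewrite divr_gt0.
have lam1 : lam <= 1 by rewrite ler_pdivrMr // mul1r.
pose y : Z := (lam * zW.1 + (1 - lam) * alphaI, lam *: betaW W + (1 - lam) *: betaI).
have yS : Sph zs eps y.
  rewrite /Sph /= prod_normE /=.
  have E1 : alphaI - (lam * zW.1 + (1 - lam) * alphaI) = lam * (alphaI - zW.1) by ring.
  have E2 : betaI - (lam *: betaW W + (1 - lam) *: betaI) = lam *: (betaI - betaW W).
    by apply/rowP => i; rewrite !mxE; ring.
  rewrite E1 E2 (normrZ lam (betaI - betaW W)) (normrM lam) (gtr0_norm lam0) -maxr_pMr ?ltW // -NE /lam.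
  by field; rewrite gt_eqF.
have gy : lam * g W zW.1 zW.2 + (1 - lam) * g W alphaI betaI <= g W y.1 y.2.
  rewrite /g /=.
  have e1 : lam * (etaW W + L W) + (1 - lam) * alphaI - L W
     = lam * (etaW W + L W - L W) + (1 - lam) * (alphaI - L W) by ring.
  rewrite e1.
  have c1 := @WLR_concave p n1 n0 x1 x0 W (ltW W0) lam (ltW lam0) lam1
     (etaW W + L W - L W) (alphaI - L W) (betaW W) betaI.
  have c2 := cJ (betaW W) betaI lam (ltW lam0) lam1.
  lra.
have gm : g W alphaI betaI <= g W zW.1 zW.2.
  rewrite /g /= (_ : etaW W + L W - L W = etaW W); last by ring.
  have := HW W W0 (alphaI - L W) betaI; lra.
have gy2 : g W alphaI betaI <= g W y.1 y.2.
  have := mulr_ge0 (ltW lam0) ((_ : 0 <= g W zW.1 zW.2 - g W alphaI betaI)).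
  lra.
have hy := cmax y (mem_set yS).
have hb := Bmax y (mem_set yS).
have up0 := D0_bnd W y.1 y.2 W0.
have up1 := D1_ge0 W y.1 y.2 W0.
have lo0 := D0_ge0 W alphaI betaI W0.
have lo1 := D1_bnd W alphaI betaI W0.
have AK : 0 <= A / n0%:R / K W by apply: divr_ge0; [apply: divr_ge0; exact: ltW | exact: ltW].
have hb' := ler_wpM2l AK hb.
have CKE : Cst / K W = B1 / K W + A / n0%:R / K W * B0m.
  by rewrite /Cst; field; rewrite !gt_eqF.
rewrite !gE // in gy2.
rewrite /fZ in hy.
rewrite CKE in CK.
rewrite /del /fZ /= in CK.
rewrite -/B1 in lo1.
lra.
Qed.
End S.

Theorem proposition2 (R : realType) (p n1 n0 : nat) (A : R)
  (x1 : 'I_n1 -> 'rV[R]_p) (x0 : 'I_n0 -> 'rV[R]_p) (J : 'rV[R]_p -> R)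
  (alphaI : R) (betaI : 'rV[R]_p)
  (etaW : R -> R) (betaW : R -> 'rV[R]_p) :
  0 < A -> (0 < n0)%N -> convex_fun J ->
  (forall alpha beta,
     ell_IPP A x1 x0 alpha beta - J beta <= ell_IPP A x1 x0 alphaI betaI - J betaI) ->
  (forall alpha beta,
     (forall alpha' beta',
        ell_IPP A x1 x0 alpha' beta' - J beta' <= ell_IPP A x1 x0 alpha beta - J beta) ->
     alpha = alphaI /\ beta = betaI) ->
  (forall W, 0 < W -> forall eta beta,
     ell_WLR W x1 x0 eta beta - J beta <= ell_WLR W x1 x0 (etaW W) (betaW W) - J (betaW W)) ->
  betaW W @[W --> +oo] --> betaI.
Proof.
move=> A0 n00 cJ Hmax Huniq HW.
exact: (@main R p n1 n0 A x1 x0 J A0 n00 cJ alphaI betaI etaW betaW Hmax Huniq HW).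
Qed.
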